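(* Let $q=5$, $m\geq 2$ and $n=\frac{q^m-1}{2}$. Then the negacyclic BCH code $\mathcal{C}_{(q,n,4,0)}$, whose generator polynomial is $\mathbb{M}_{\beta}(x)\mathbb{M}_{\beta^3}(x)$, has parameters $[n,n-2m,4]$ and is distance-optimal with respect to the sphere-packing bound.
   Context: Let $\ell$ be the order of $q$ modulo $2n$, $\alpha$ a primitive element of $\mathrm{GF}(q^\ell)$, $\beta=\alpha^{(q^\ell-1)/(2n)}$ (a primitive $2n$-th root of unity), and $\mathbb{M}_{\beta^j}(x)$ the minimal polynomial of $\beta^j$ over $\mathrm{GF}(q)$. $\mathcal{C}_{(q,n,4,0)}$ is the negacyclic code of length $n$ over $\mathrm{GF}(q)$, i.e. the ideal of $\mathrm{GF}(q)[x]/(x^n+1)$ generated by $\mathrm{lcm}(\mathbb{M}_{\beta}(x),\mathbb{M}_{\beta^3}(x),\mathbb{M}_{\beta^5}(x))$. An $[n,k,d]$ code over $\mathrm{GF}(q)$ is distance-optimal with respect to the sphere-packing bound if the sphere-packing bound shows that no $[n,k,d+1]$ linear code over $\mathrm{GF}(q)$ exists. *)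

(* Defs.v *)
From HB Require Import structures.
From mathcomp Require Import all_boot all_order all_algebra all_field.
Set Implicit Arguments. Unset Strict Implicit. Unset Printing Implicit Defensive.
Import GRing.Theory.
Local Open Scope ring_scope.

(* Embedding of GF(5) = 'F_5 into a field F (a ring morphism when char F = 5). *)
Definition toF (F : fieldType) (a : 'F_5) : F := (val a)%:R.

Definition ord_mod (q N l : nat) : Prop :=
  (0 < l)%N /\ (q ^ l %% N = 1 %% N)%N /\
  forall k, (0 < k < l)%N -> (q ^ k %% N != 1 %% N)%N.

Definition is_minpoly5 (F : fieldType) (b : F) (p : {poly 'F_5}) : Prop :=
  p \is monic /\ root (map_poly (@toF F) p) b /\
  forall r : {poly 'F_5}, r != 0 -> root (map_poly (@toF F) r) b ->
    (size p <= size r)%N.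

Definition is_lcm3 (a b c g : {poly 'F_5}) : Prop :=
  g \is monic /\ a %| g /\ b %| g /\ c %| g /\
  forall h : {poly 'F_5}, a %| h -> b %| h -> c %| h -> g %| h.

Definition wpoly (n : nat) (c : 'rV['F_5]_n) : {poly 'F_5} := \sum_(i < n) c 0 i *: 'X^i.

(* The negacyclic code of length n generated by g: the ideal (g) of
   R = GF(5)[x]/(x^n+1), elements of R being represented by their reduced
   representatives of degree < n, i.e. by words of length n. *)
Definition negacyclic_code (n : nat) (g : {poly 'F_5}) : {set 'rV['F_5]_n} :=
  [set c : 'rV['F_5]_n |
     [exists a : 'rV['F_5]_n, wpoly c == (wpoly a * g) %% ('X^n + 1)]].

Local Close Scope ring_scope.
Definition wt (n : nat) (c : 'rV['F_5]_n) : nat := #|[set i | c ord0 i != 0%R]|.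

(* C has minimum distance d (linear code: minimum nonzero weight). *)
Definition min_dist (n : nat) (C : {set 'rV['F_5]_n}) (d : nat) : Prop :=
  (exists2 c, c \in C & (c != 0%R) && (wt c == d)) /\
  forall c, c \in C -> c != 0%R -> (d <= wt c)%N.

Definition code_dim (n : nat) (C : {set 'rV['F_5]_n}) : nat := \dim <<enum C>>%VS.

Definition sp_excludes (q n k d : nat) : Prop :=
  (q ^ n < q ^ k * \sum_(0 <= i < ((d - 1) %/ 2).+1) 'C(n, i) * (q - 1) ^ i)%N.

Definition sp_distance_optimal (q n k d : nat) : Prop := sp_excludes q n k d.+1.

(* Main.v *)
From HB Require Import structures.
Require Import Defs.
From mathcomp Require Import all_boot all_order all_algebra all_field.
From mathcomp Require Import ring zify.
Set Implicit Arguments. Unset Strict Implicit. Unset Printing Implicit Defensive.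
Import GRing.Theory.
Local Open Scope ring_scope.
Section S.
Variable F : finFieldType.
Hypothesis hchar : 5%N \in [pchar F].

Lemma natr_mod5 k : ((k %% 5)%N%:R : F) = k%:R.
Proof.
by rewrite [in RHS](divn_eq k 5) natrD natrM (pcharf0 hchar) mulr0 add0r.
Qed.

Lemma toF_add : zmod_morphism (@toF F).
Proof.
move=> a b; rewrite /toF /= natr_mod5 natrD natr_mod5 natrB; last by apply: ltnW; case: b.
by rewrite (pcharf0 hchar) sub0r.
Qed.

Lemma toF_mul : monoid_morphism (@toF F).
Proof.
split; first by rewrite /toF /= .
move=> a b; rewrite /toF /=.
by rewrite natr_mod5 natrM.
Qed.

HB.instance Definition _ := GRing.isZmodMorphism.Build 'F_5 F (@toF F) toF_add.
HB.instance Definition _ := GRing.isMonoidMorphism.Build 'F_5 F (@toF F) toF_mul.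

Lemma natr5_neq0 k : (0 < k < 5)%N -> (k%:R : F) != 0.
Proof.
move=> hk; apply/negP => /eqP h.
have : (5 %| k)%N by rewrite (dvdn_pcharf hchar) h.
by case/andP: hk => h0 h5 /(dvdn_leq h0); rewrite leqNgt h5.
Qed.

Lemma toF_eq0 a : (toF F a == 0) = (a == 0).
Proof.
apply/idP/idP => [|/eqP->]; last by rewrite rmorph0.
case: a => [[|k] hk] //= /eqP; rewrite /toF /= => h.
by move: (natr5_neq0 (k:=k.+1)); rewrite h eqxx hk => /(_ isT).
Qed.

Lemma toF_inj : injective (@toF F).
Proof.
move=> a b e; apply/eqP; rewrite -subr_eq0 -toF_eq0.
have -> : toF F (a - b) = toF F a - toF F b by apply: rmorphB.
by rewrite e subrr.
Qed.

Local Notation mp := (map_poly (toF F)).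

Lemma minpoly_dvd b p r : is_minpoly5 b p -> root (mp r) b -> p %| r.
Proof.
case=> pm [rp pmin] rr.
have p0 : p != 0 by apply: monic_neq0.
rewrite /dvdp; apply/negPn/negP => hne.
have hr : root (mp (r %% p)) b.
  move: rr; rewrite {1}(divp_eq r p) rmorphD rmorphM /root hornerD hornerM.
  by move: rp; rewrite /root => /eqP ->; rewrite mulr0 add0r.
have := pmin _ hne hr.
by rewrite leqNgt ltn_modp p0.
Qed.

Lemma F5_frob (a : 'F_5) : a ^+ 5 = a.
Proof.
by case: a => [[|[|[|[|[|k]]]]] hk]; apply/val_inj => //=.
Qed.

Lemma frob_root r x : root (mp r) x -> root (mp r) (x ^+ 5).
Proof.
rewrite /root => /eqP h.
have e : map_poly (pFrobenius_aut hchar) (mp r) = mp r.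
  rewrite -map_poly_comp; apply: eq_map_poly => a /=.
  by rewrite pFrobenius_autE -rmorphXn F5_frob.
rewrite -e -(pFrobenius_autE hchar x) horner_map h.
by rewrite rmorph0.
Qed.

Lemma frob_root_iter r x i : root (mp r) x -> root (mp r) (x ^+ (5 ^ i)).
Proof.
elim: i => [|i IH] h; first by rewrite expn0 expr1.
by rewrite expnSr exprM; apply: frob_root; apply: IH.
Qed.
Lemma minpoly_size_le (b : F) p m : #|F| = (5 ^ m)%N -> is_minpoly5 b p -> (size p <= m.+1)%N.
Proof.
move=> hc [pm [rp pmin]].
rewrite leqNgt; apply/negP => hlt.
pose R := pPrimeCharType hchar.
pose X := [tuple (b : R) ^+ i | i < m.+1].
have hfree : free X.
  apply/freeP => k hk i.
  pose Q := \poly_(j < m.+1) k (inord j).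
  case: (Q =P 0) => [Q0|/eqP Qn0].
    by move: (congr1 (fun q : {poly 'F_5} => q`_i) Q0); rewrite coef_poly ltn_ord coef0 inord_val.
  have hQ : root (mp Q) b.
    rewrite /root (@horner_coef_wide _ m.+1); last first.
      by rewrite size_map_poly size_poly.
    apply/eqP; rewrite -[RHS]hk; apply: eq_bigr => j _.
    rewrite coef_map coef_poly ltn_ord inord_val -tnth_nth tnth_mktuple.
    by [].
  have := pmin _ Qn0 hQ.
  by rewrite leqNgt (leq_ltn_trans (size_poly _ _) hlt).
move: hfree; rewrite /free size_tuple.
have : (\dim <<X>> <= m)%N.
  have e : m = \dim {: R : vectType 'F_5 }.
    by rewrite pprimeChar_dimf /= hc pfactorK.
  by rewrite {2}e dimvS // subvf.
by move=> h1 /eqP h2; move: h1; rewrite h2 ltnn.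
Qed.
Lemma root_dvd p r x : p %| r -> root (mp p) x -> root (mp r) x.
Proof.
case/dvdpP => q ->; rewrite /root rmorphM hornerM => /eqP ->.
by rewrite mulr0.
Qed.

Variables (m : nat) (hm : (2 <= m)%N) (hcard : #|F| = (5 ^ m)%N).
Variable beta : F.
Hypothesis hb : (5 ^ m - 1).-primitive_root beta.

Lemma N_ge : (24 <= 5 ^ m - 1)%N.
Proof.
have : (5 ^ 2 <= 5 ^ m)%N by rewrite leq_exp2l.
by move=> h; have := leq_sub2r 1 h.
Qed.

Lemma N_even : (2 * ((5 ^ m - 1) %/ 2) = 5 ^ m - 1)%N.
Proof.
rewrite mulnC divnK // dvdn2 oddB ?expn_gt0 // oddX /=.
by case: m.
Qed.

Lemma expb_inj i j : (i < 5 ^ m - 1)%N -> (j < 5 ^ m - 1)%N ->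
  beta ^+ i = beta ^+ j -> i = j.
Proof.
move=> hi hj /eqP; rewrite (eq_prim_root_expr hb) !modn_small //.
by move/eqP.
Qed.

Lemma size_g_ge (g : {poly 'F_5}) : g != 0 -> root (mp g) beta -> root (mp g) (beta ^+ 3) ->
  ((2 * m).+1 <= size g)%N.
Proof.
move=> g0 r1 r3.
pose es := [seq (5 ^ i)%N | i <- iota 0 m] ++ [seq (3 * 5 ^ i)%N | i <- iota 0 m].
pose rs := [seq beta ^+ e | e <- es].
have hlt : forall e, e \in es -> (e < 5 ^ m - 1)%N.
  move=> e; rewrite mem_cat => /orP [] /mapP [i]; rewrite mem_iota add0n => /andP [_ hi] ->.
    have : (5 ^ i.+1 <= 5 ^ m)%N by rewrite leq_exp2l.
    rewrite expnS; have := expn_gt0 5 i; lia.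
  have : (5 ^ i.+1 <= 5 ^ m)%N by rewrite leq_exp2l.
  rewrite expnS; have := expn_gt0 5 i; lia.
have ues : uniq es.
  rewrite cat_uniq; apply/and3P; split.
  - rewrite map_inj_uniq ?iota_uniq //.
    by move=> i j /eqP; rewrite eqn_exp2l // => /eqP.
  - apply/hasPn => e /mapP [i _ ->]; apply/negP => /mapP [j _ h].
    have : (3 %| 5 ^ j)%N by rewrite -h dvdn_mulr.
    by rewrite Euclid_dvdX.
  - rewrite map_inj_uniq ?iota_uniq //.
    by move=> i j /eqP; rewrite eqn_pmul2l // eqn_exp2l // => /eqP.
have urs : uniq rs.
  rewrite map_inj_in_uniq // => i j hi hj; exact: expb_inj (hlt _ hi) (hlt _ hj).
have ars : all (root (mp g)) rs.
  apply/allP => x /mapP [e]; rewrite mem_cat => /orP [] /mapP [i _ ->] ->.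
    exact: frob_root_iter.
  by rewrite exprM; apply: frob_root_iter.
have := max_poly_roots _ ars urs.
rewrite size_map_poly size_map size_cat !size_map size_iota.
rewrite map_poly_eq0 => /(_ g0).
by rewrite mul2n -addnn.
Qed.
Lemma g_eq M1 M3 M5 g : is_minpoly5 beta M1 -> is_minpoly5 (beta ^+ 3) M3 ->
  is_minpoly5 (beta ^+ 5) M5 -> is_lcm3 M1 M3 M5 g ->
  g = M1 * M3 /\ size g = (2 * m).+1.
Proof.
move=> h1 h3 h5 [gm [d1 [d3 [d5 hl]]]].
have g0 : g != 0 by apply: monic_neq0.
have s1 := minpoly_size_le hcard h1.
have s3 := minpoly_size_le hcard h3.
have [m1 [r1 _]] := h1; have [m3 [r3 _]] := h3.
have hge := size_g_ge g0 (root_dvd d1 r1) (root_dvd d3 r3).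
have dg : g %| M1 * M3.
  apply: hl; [exact: dvdp_mulIl | exact: dvdp_mulIr | ].
  apply: dvdp_mulr; apply: minpoly_dvd h5 _; exact: frob_root.
have m13 : M1 * M3 \is monic by rewrite monicMl.
have n13 : M1 * M3 != 0 by apply: monic_neq0.
have hle := dvdp_leq n13 dg.
have n1 : M1 != 0 by apply: monic_neq0.
have n3 : M3 != 0 by apply: monic_neq0.
have hs : size (M1 * M3) = (2 * m).+1.
  move: hle hge; rewrite !size_mul //.
  move: s1 s3 (size_poly_gt0 M1) (size_poly_gt0 M3); rewrite n1 n3.
  move: (size M1) (size M3) (size g) => a b c.
  clear; move=> *; lia.
have : g %= M1 * M3.
  rewrite -dvdp_size_eqp // hs; apply/eqP.
  move: hle hge; rewrite hs; move: (size g) => c; clear; move=> *; lia.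
by rewrite eqp_monic // => /eqP ->.
Qed.
Local Notation n := ((5 ^ m - 1) %/ 2)%N.

Lemma n_gt : (12 <= n)%N.
Proof. have := N_ge; have := N_even; lia. Qed.

Lemma beta_neq0 : beta != 0.
Proof.
apply/negP => /eqP b0; have := prim_expr_order hb; rewrite b0 expr0n.
have := N_ge; case: (5 ^ m - 1)%N => // k _ /eqP; rewrite eq_sym oner_eq0.
by [].
Qed.

Lemma beta_n : beta ^+ n = -1.
Proof.
have h2 : (beta ^+ n) ^+ 2 = 1 by rewrite -exprM mulnC N_even prim_expr_order.
have h1 : beta ^+ n != 1.
  rewrite -(prim_order_dvd hb); apply/negP => /(dvdn_leq _).
  have := n_gt; have := N_even; move=> e h /(_ (leq_trans _ h)) /=.
  by move=> /(_ isT); lia.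
have : (beta ^+ n - 1) * (beta ^+ n + 1) = 0.
  by rewrite mulrDr mulr1 mulrBl mul1r -expr2 h2 addrA subrK subrr.
move/eqP; rewrite mulf_eq0 subr_eq0 (negPf h1) /= addr_eq0 => /eqP.
by [].
Qed.

Lemma eval_wpoly (c : 'rV['F_5]_n) (x : F) :
  (mp (wpoly c)).[x] = \sum_(i < n) toF F (c 0 i) * x ^+ i.
Proof.
rewrite /wpoly rmorph_sum horner_sum; apply: eq_bigr => i _.
by rewrite /= map_polyZ map_polyXn hornerZ hornerXn.
Qed.

Lemma z_inj (i j : 'I_n) : beta ^+ (2 * i) = beta ^+ (2 * j) -> i = j.
Proof.
move=> /expb_inj h; apply/val_inj => /=.
have hi := ltn_ord i; have hj := ltn_ord j; have := N_even.
move: h hi hj; move: (nat_of_ord i) (nat_of_ord j) => a b.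
move: (5 ^ m - 1)%N => N h hi hj e; move: h; rewrite -e ltn_pmul2l // hi ltn_pmul2l // hj.
by move=> /(_ isT isT) h; lia.
Qed.

Lemma wt_ge4 (c : 'rV['F_5]_n) : root (mp (wpoly c)) beta ->
  root (mp (wpoly c)) (beta ^+ 3) -> root (mp (wpoly c)) (beta ^+ 5) ->
  c != 0 -> (4 <= wt c)%N.
Proof.
move=> r1 r3 r5 c0; rewrite leqNgt; apply/negP => hw.
pose S := [set i : 'I_n | c ord0 i != 0].
have [i0 Si0] : exists i0, i0 \in S.
  apply/existsP; move: c0; apply: contraR; rewrite negb_exists => /forallP h.
  apply/eqP/rowP => j; rewrite mxE.
  by have := h j; rewrite inE negbK => /eqP.
pose z (i : 'I_n) := beta ^+ (2 * i).
pose w (i : 'I_n) := toF F (c 0 i) * beta ^+ i.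
have eqk : forall k, (k < 3)%N -> \sum_(i < n) w i * z i ^+ k = 0.
  move=> k hk.
  have r : root (mp (wpoly c)) (beta ^+ (2 * k + 1)).
    by case: k hk => [|[|[|k]]] //= _; rewrite expr1.
  move: r; rewrite /root eval_wpoly => /eqP h; rewrite -[RHS]h; apply: eq_bigr => i _.
  rewrite /w /z -mulrA -!exprM -exprD; congr (_ * beta ^+ _).
  by case: k {h} hk => [|[|[|k]]] //= _; lia.
pose S' := S :\ i0.
pose rs := [seq z j | j <- enum S'].
pose P := \prod_(x <- rs) ('X - x%:P).
have sP : (size P <= 3)%N.
  rewrite size_prod_XsubC size_map -cardE.
  have := cardsD1 i0 S; rewrite Si0 -/S' => e.
  have : #|S| = wt c by [].
  by move: hw; rewrite ltnS => hw e2; move: e hw; rewrite e2; lia.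
have key : \sum_(i < n) w i * P.[z i] = 0.
  transitivity (\sum_(k < 3) P`_k * \sum_(i < n) w i * z i ^+ k).
    under [RHS]eq_bigr => k _ do rewrite mulr_sumr.
    rewrite exchange_big; apply: eq_bigr => i _.
    rewrite (horner_coef_wide _ sP) mulr_sumr; apply: eq_bigr => k _.
    by rewrite mulrCA.
  by rewrite big1 // => k _; rewrite eqk ?mulr0.
have key2 : \sum_(i < n) w i * P.[z i] = w i0 * P.[z i0].
  rewrite (bigD1 i0) //= big1 ?addr0 // => i hi.
  case: (boolP (i \in S)) => hS.
    have : root P (z i).
      by rewrite root_prod_XsubC; apply: map_f; rewrite mem_enum in_setD1 hi hS.
    by move/eqP => ->; rewrite mulr0.
  rewrite /w; have -> : c 0 i = 0 by move: hS; rewrite inE negbK => /eqP.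
  by rewrite rmorph0 !mul0r.
move: key; rewrite key2 => /eqP; rewrite mulf_eq0 => /orP [].
  rewrite mulf_eq0 toF_eq0 (expf_eq0) (negPf beta_neq0) andbF orbF.
  by move: Si0; rewrite inE => /negPf ->.
move=> hr; have : root P (z i0) by [].
rewrite root_prod_XsubC => /mapP [j]; rewrite mem_enum in_setD1 => /andP [hj _].
by move/z_inj => e; move: hj; rewrite e eqxx.
Qed.
Lemma b4 : beta ^+ 4 != 1.
Proof.
rewrite -(prim_order_dvd hb); apply/negP => /(dvdn_leq (isT : (0 < 4)%N)).
by have := N_ge; lia.
Qed.

Lemma b5 : beta ^+ 5 != beta.
Proof.
apply: contra b4 => /eqP h; apply/eqP; apply: (mulIf beta_neq0).
by rewrite mul1r -exprSr.
Qed.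

Lemma bm1 : (beta - 1) ^+ 4 != 1.
Proof.
apply: contra b5 => /eqP h.
have e : (beta - 1) ^+ 5 = beta ^+ 5 - 1.
  by rewrite -!(pFrobenius_autE hchar) rmorphB rmorph1.
by move: e; rewrite exprSr h mul1r => /eqP; rewrite eq_sym subr_eq subrK => /eqP ->.
Qed.

Lemma rep_pow (x : F) : x != 0 ->
  exists (p : 'I_n) (s : 'F_5), s ^+ 2 = 1 /\ x = toF F s * beta ^+ p.
Proof.
move=> x0.
have hx : x ^+ (5 ^ m - 1) = 1.
  apply: (mulIf x0); rewrite mul1r -exprSr.
  have -> : (5 ^ m - 1).+1 = #|F| by rewrite hcard; have := N_ge; lia.
  exact: expf_card.
have [i ->] := prim_rootP hb hx.
have hi := ltn_ord i.
case: (ltnP i n) => hin.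
  by exists (Ordinal hin), 1; rewrite expr1n rmorph1 mul1r.
have hlt : (i - n < n)%N by have := N_even; lia.
exists (Ordinal hlt), (-1); split; first by rewrite sqrrN expr1n.
rewrite rmorphN1 /= -beta_n -exprD; congr (_ ^+ _); lia.
Qed.

Lemma F5_sq (s : 'F_5) : s ^+ 2 = 1 -> 1 + 2 * s != 0.
Proof.
by case: s => [[|[|[|[|[|k]]]]] hk] //= /(congr1 val).
Qed.
Lemma sum_ind (a : 'F_5) (p : 'I_n) (y : F) :
  \sum_(j < n) toF F (a * (j == p)%:R) * y ^+ j = toF F a * y ^+ p.
Proof.
rewrite (bigD1 p) //= eqxx mulr1 big1 ?addr0 // => j /negPf ->.
by rewrite mulr0 rmorph0 mul0r.
Qed.

Lemma witness : exists2 c : 'rV['F_5]_n, c != 0 &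
  [/\ root (mp (wpoly c)) beta, root (mp (wpoly c)) (beta ^+ 3) & (wt c <= 4)%N].
Proof.
have b1 : beta - 1 != 0.
  rewrite subr_eq0; apply: contra b4 => /eqP ->; by rewrite expr1n.
have b1' : beta + 1 != 0.
  rewrite addr_eq0; apply: contra b4 => /eqP ->.
  by rewrite -signr_odd /= expr0.
have [p3 [s3 [hs3 e3]]] := rep_pow (expf_neq0 2 b1).
have [p4 [s4 [hs4 e4]]] := rep_pow (expf_neq0 2 b1').
have hn0 : (0 < n)%N by have := n_gt; lia.
have hn2 : (2 < n)%N by have := n_gt; lia.
pose o0 := Ordinal hn0; pose o2 := Ordinal hn2.
pose cw : 'rV['F_5]_n := \row_j ((j == o0)%:R + (j == o2)%:R +
   (2 * s3) * (j == p3)%:R + (2 * s4) * (j == p4)%:R).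
have ev : forall y, (mp (wpoly cw)).[y] =
    y ^+ o0 + y ^+ o2 + toF F (2 * s3) * y ^+ p3 + toF F (2 * s4) * y ^+ p4.
  move=> y; rewrite eval_wpoly.
  under eq_bigr => j _ do rewrite mxE 3!rmorphD 3!mulrDl.
  rewrite !big_split /= !sum_ind.
  congr (_ + _ + _ + _).
    have h := sum_ind 1 o0 y; rewrite rmorph1 mul1r in h.
    by rewrite -h; apply: eq_bigr => j _; rewrite mul1r.
  have h := sum_ind 1 o2 y; rewrite rmorph1 mul1r in h.
  by rewrite -h; apply: eq_bigr => j _; rewrite mul1r.
have t2 : toF F 2 = 2 by rewrite rmorph_nat.
have p30 : p3 != o0.
  apply/negP => /eqP h; case/negP: bm1; apply/eqP.
  have : ((beta - 1) ^+ 2) ^+ 2 = (toF F s3 * beta ^+ p3) ^+ 2 by rewrite e3.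
  by rewrite -exprM /= h expr0 mulr1 -rmorphXn hs3 rmorph1.
exists cw.
  rewrite eq_sym in p30.
  apply/negP => /eqP /rowP /(_ o0); rewrite !mxE eqxx (negPf p30) mulr0 addr0.
  have -> : (o0 == o2) = false by [].
  rewrite addr0; case: (o0 == p4); rewrite ?mulr1 ?mulr0 ?addr0.
    by move/eqP; rewrite (negPf (F5_sq hs4)).
  by [].
split.
- rewrite /root ev rmorphM rmorphM /= t2 -!mulrA -e3 -e4 /= expr0 expr2.
  apply/eqP; have -> : 1 + beta * beta + 2 * (beta - 1) ^+ 2 + 2 * (beta + 1) ^+ 2 =
     5%:R * (1 + beta * beta) by ring.
  by rewrite (pcharf0 hchar) mul0r.
- have c3 : forall (s : 'F_5) (x : F), s ^+ 2 = 1 ->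
      toF F s * x ^+ 3 = (toF F s * x) ^+ 3.
    by move=> s x hs; rewrite exprMn -rmorphXn [s ^+ 3]exprS hs mulr1.
  rewrite /root ev rmorphM rmorphM /= t2 -!mulrA.
  rewrite (exprAC beta 3 p3) (exprAC beta 3 p4) (exprAC beta 3 o2) (exprAC beta 3 o0).
  rewrite (c3 _ _ hs3) (c3 _ _ hs4) -e3 -e4 /= expr0 expr1n.
  apply/eqP; have -> : 1 + (beta ^+ 2) ^+ 3 + 2 * ((beta - 1) ^+ 2) ^+ 3 +
      2 * ((beta + 1) ^+ 2) ^+ 3 =
     5%:R * (beta ^+ 6 + 12%:R * beta ^+ 4 + 12%:R * beta ^+ 2 + 1) by ring.
  by rewrite (pcharf0 hchar) mul0r.
- pose s := [:: o0; o2; p3; p4].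
  apply: leq_trans (_ : (#|s| <= 4)%N); last exact: card_size.
  apply: subset_leq_card; apply/subsetP => j; rewrite inE mxE.
  rewrite !inE.
  by case: (j == o0); case: (j == o2); case: (j == p3); case: (j == p4);
    rewrite ?orbT //= ?mulr0 ?addr0 ?eqxx.
Qed.
Lemma root_Xn1 k : odd k -> root (mp ('X^n + 1)) (beta ^+ k).
Proof.
move=> hk; rewrite /root rmorphD rmorph1 /= map_polyXn hornerD hornerXn hornerC.
by rewrite exprAC beta_n -signr_odd hk expr1 addNr.
Qed.

Lemma g_div M1 M3 M5 g : is_minpoly5 beta M1 -> is_minpoly5 (beta ^+ 3) M3 ->
  is_minpoly5 (beta ^+ 5) M5 -> is_lcm3 M1 M3 M5 g -> g %| 'X^n + 1.
Proof.
move=> h1 h3 h5 [_ [_ [_ [_ hl]]]]; apply: hl.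
- by apply: (minpoly_dvd h1); rewrite -[beta]expr1; apply: root_Xn1.
- by apply: (minpoly_dvd h3); apply: root_Xn1.
- by apply: (minpoly_dvd h5); apply: root_Xn1.
Qed.
End S.

Lemma ord_eq m l : (2 <= m)%N -> ord_mod 5 (2 * ((5 ^ m - 1) %/ 2)) l -> l = m.
Proof.
move=> hm; have hN : (2 * ((5 ^ m - 1) %/ 2) = 5 ^ m - 1)%N.
  rewrite mulnC divnK // dvdn2 oddB ?expn_gt0 // oddX /=; by case: (m) hm.
rewrite hN => [[l0 [e hk]]].
have h25 : (5 ^ 2 <= 5 ^ m)%N by rewrite leq_exp2l.
have h1 : (1 %% (5 ^ m - 1) = 1)%N by rewrite modn_small //; lia.
case: (ltngtP l m) => // hlm.
- have hl : (5 ^ l.+1 <= 5 ^ m)%N by rewrite leq_exp2l.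
  move: e; rewrite h1 modn_small; last by move: hl; rewrite expnS; lia.
  move=> e; have : (5 ^ 1 <= 5 ^ l)%N by rewrite leq_exp2l.
  by rewrite e.
- have := hk m; rewrite hlm (leq_trans _ hm) // h1.
  rewrite -{1}(subnK (expn_gt0 5 m)).
  by rewrite modnDl h1 eqxx => /(_ isT).
Qed.
Section Dim.
Variable n : nat.

Lemma wpoly_coefE (c : 'rV['F_5]_n) k :
  (wpoly c)`_k = \sum_(i < n) (if (i == k :> nat) then c 0 i else 0).
Proof.
rewrite /wpoly coef_sum; apply: eq_bigr => i _.
by rewrite coefZ coefXn eq_sym; case: eqP => _; rewrite ?mulr1 ?mulr0.
Qed.

Lemma wpoly_coef (c : 'rV['F_5]_n) (j : 'I_n) : (wpoly c)`_j = c 0 j.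
Proof.
rewrite wpoly_coefE (bigD1 j) //= eqxx big1 ?addr0 // => i hij.
by case: eqP => // /val_inj e; move: hij; rewrite e eqxx.
Qed.

Lemma wpoly_coef_ge (c : 'rV['F_5]_n) k : (n <= k)%N -> (wpoly c)`_k = 0.
Proof.
move=> hk; rewrite wpoly_coefE big1 // => i _.
case: eqP => // e; move: (ltn_ord i); rewrite e ltnNge hk.
by [].
Qed.

Lemma size_wpoly (c : 'rV['F_5]_n) : (size (wpoly c) <= n)%N.
Proof. by apply/leq_sizeP => j hj; rewrite wpoly_coef_ge. Qed.

Definition rowp (p : {poly 'F_5}) : 'rV['F_5]_n := \row_j p`_j.

Lemma wpoly_rowp (p : {poly 'F_5}) : (size p <= n)%N -> wpoly (rowp p) = p.
Proof.
move=> hs; apply/polyP => j.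
case: (ltnP j n) => hj.
  by rewrite (wpoly_coef _ (Ordinal hj)) mxE.
by rewrite wpoly_coef_ge // nth_default // (leq_trans hs).
Qed.

Lemma rowp_wpoly c : rowp (wpoly c) = c.
Proof. by apply/rowP => j; rewrite mxE wpoly_coef. Qed.

Lemma wpoly_inj : injective (@wpoly n).
Proof. by move=> a b e; rewrite -(rowp_wpoly a) e rowp_wpoly. Qed.

Lemma wpoly0 : wpoly (0 : 'rV['F_5]_n) = 0.
Proof.
apply/polyP => j; case: (ltnP j n) => hj.
  by rewrite (wpoly_coef _ (Ordinal hj)) mxE coef0.
by rewrite wpoly_coef_ge ?coef0.
Qed.

End Dim.
Arguments rowp : clear implicits.
Section Dim2.
Variable n : nat.
Variable g : {poly 'F_5}.
Hypothesis gdiv : g %| 'X^n + 1.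
Hypothesis g0 : g != 0.

Lemma size_Xn1 : (0 < n)%N -> size ('X^n + 1 : {poly 'F_5}) = n.+1.
Proof. by move=> hn; rewrite -[1]/(1%:P) size_XnaddC. Qed.

Hypothesis hn : (0 < n)%N.

Lemma mem_code c : (c \in negacyclic_code n g) = (g %| wpoly c).
Proof.
rewrite inE; apply/existsP/idP => [[a /eqP ->]|].
  by rewrite -dvdp_mod // dvdp_mull.
case/dvdpP => h e.
have hs : (size h <= n)%N.
  case: (h =P 0) => [->|/eqP h0]; first by rewrite size_poly0.
  apply: leq_trans (size_wpoly c); rewrite e size_mul //.
  have := size_poly_gt0 g; rewrite g0; move: (size g) (size h) => a b; clear; lia.
exists (rowp _ h); rewrite wpoly_rowp // -e modp_small //.
by rewrite size_Xn1 // ltnS size_wpoly.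
Qed.

Variable d : nat.
Hypothesis hsg : size g = d.+1.
Hypothesis hdn : (d <= n)%N.

Definition Gm : 'M['F_5]_(n - d, n) := \matrix_(i, j) ('X^i * g)`_j.

Lemma mulGm (a : 'rV['F_5]_(n - d)) : a *m Gm = rowp n (wpoly a * g).
Proof.
apply/rowP => j; rewrite !mxE /wpoly mulr_suml coef_sum.
by apply: eq_bigr => i _; rewrite mxE -scalerAl coefZ.
Qed.

Lemma size_wg (a : 'rV['F_5]_(n - d)) : (size (wpoly a * g)%R <= n)%N.
Proof.
apply: leq_trans (size_polyMleq _ _) _; rewrite hsg addnS /=.
have := size_wpoly a; move: (size (wpoly a)) => s; clear -hdn; lia.
Qed.

Lemma code_dim_eq : code_dim (negacyclic_code n g) = (n - d)%N.
Proof.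
pose f : 'Hom('rV['F_5]_(n - d), 'rV['F_5]_n) := linfun (mulmxr Gm).
have fE : forall a, f a = a *m Gm by move=> a; rewrite lfunE.
have finj : injective f.
  move=> a b; rewrite !fE !mulGm => /(congr1 (@wpoly n)).
  rewrite !wpoly_rowp ?size_wg // => /(mulIf g0).
  exact: (@wpoly_inj (n - d)).
have hdim : \dim (f @: fullv) = (n - d)%N.
  rewrite limg_dim_eq; last by move/lker0P: finj => /eqP ->; rewrite capv0.
  by rewrite dimvf /dim /= mul1n.
rewrite /code_dim -hdim; congr (\dim _).
apply/eqP; rewrite eqEsubv; apply/andP; split.
  apply/span_subvP => c; rewrite mem_enum mem_code => /dvdpP [h e].
  have hs : (size h <= n - d)%N.
    case: (h =P 0) => [->|/eqP h0]; first by rewrite size_poly0.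
    have := size_wpoly c; rewrite e size_mul // hsg addnS /=.
    move: (size h) => s; clear -hdn; lia.
  apply/memv_imgP; exists (rowp _ h); first exact: memvf.
  rewrite fE mulGm wpoly_rowp // -e rowp_wpoly //.
apply/subvP => y /memv_imgP [a _ ->]; apply: memv_span.
rewrite mem_enum mem_code fE mulGm wpoly_rowp ?size_wg //.
exact: dvdp_mull.
Qed.
End Dim2.
Lemma pow5_ge m : (4 * m + 1 <= 5 ^ m)%N.
Proof.
elim: m => // m IH; rewrite expnS; have := expn_gt0 5 m; lia.
Qed.

Lemma sp_ok m : (2 <= m)%N ->
  sp_distance_optimal 5 ((5 ^ m - 1) %/ 2) ((5 ^ m - 1) %/ 2 - 2 * m) 4.
Proof.
move=> hm; rewrite /sp_distance_optimal /sp_excludes /=.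
set n := ((5 ^ m - 1) %/ 2)%N.
have hN : (2 * n + 1 = 5 ^ m)%N.
  rewrite /n mulnC divnK; first by have := expn_gt0 5 m; lia.
  rewrite dvdn2 oddB ?expn_gt0 // oddX /=; by case: (m) hm.
have h2m : (2 * m <= n)%N.
  have := pow5_ge m; have : (5 ^ 2 <= 5 ^ m)%N by rewrite leq_exp2l.
  lia.
have h25 : (5 ^ 2 <= 5 ^ m)%N by rewrite leq_exp2l.
have n12 : (12 <= n)%N by lia.
clearbody n.
rewrite -{1}(subnK h2m) expnD ltn_pmul2l ?expn_gt0 //.
rewrite (_ : ((5 - 1) %/ 2).+1 = 3) // (_ : (5 - 1 = 4)%N) //.
rewrite !big_nat_recr //= big_geq // add0n.
rewrite (mulnC 2 m) expnM -hN bin2 expn0 expn1 bin0 bin1.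
have key := odd_double_half (n * n.-1).
move: key; set C := (n * n.-1)./2; set b := odd _.
clearbody C b; clear -n12.
case: n n12 => // k hk; rewrite /= => key.
have : (b <= 1)%N by case: b {key}.
move=> hb; rewrite !expnS !expn0 !muln1.
nia.
Qed.
Unset Implicit Arguments.
Theorem theorem41 (m : nat) (hm : (2 <= m)%N)
  (l : nat) (hl : ord_mod 5 (2 * ((5 ^ m - 1) %/ 2)) l)
  (F : finFieldType) (hchar : 5%N \in [pchar F]) (hcard : #|F| = (5 ^ l)%N)
  (alpha : F) (halpha : (#|F|.-1).-primitive_root alpha)
  (M1 M3 M5 g : {poly 'F_5}) :
  let n := ((5 ^ m - 1) %/ 2)%N in
  let beta := alpha ^+ ((5 ^ l - 1) %/ (2 * n)) in
  is_minpoly5 beta M1 -> is_minpoly5 (beta ^+ 3) M3 -> is_minpoly5 (beta ^+ 5) M5 ->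
  is_lcm3 M1 M3 M5 g ->
  let C := negacyclic_code n g in
  g = M1 * M3 /\
  code_dim C = (n - 2 * m)%N /\ min_dist C 4 /\
  sp_distance_optimal 5 n (n - 2 * m) 4.
Proof.
have el := ord_eq hm hl; subst l.
have hN : (2 * ((5 ^ m - 1) %/ 2) = 5 ^ m - 1)%N.
  rewrite mulnC divnK // dvdn2 oddB ?expn_gt0 // oddX /=; by case: (m) hm.
move=> n beta; rewrite /beta /n hN divnn.
have h25 : (5 ^ 2 <= 5 ^ m)%N by rewrite leq_exp2l.
have -> : (0 < 5 ^ m - 1)%N by lia.
rewrite expr1 => h1 h3 h5 hlc.
set C := negacyclic_code _ g.
have hb : (5 ^ m - 1).-primitive_root alpha by rewrite -hcard subn1.
have [ge sg] := g_eq hchar hm hcard hb h1 h3 h5 hlc.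
have gm : g \is monic by case: hlc.
have g0 : g != 0 by apply: monic_neq0.
have gd := g_div hchar hm hcard hb h1 h3 h5 hlc.
have n12 := n_gt hchar hm hcard hb.
have hn : (0 < (5 ^ m - 1) %/ 2)%N by lia.
have hdn : (2 * m <= (5 ^ m - 1) %/ 2)%N.
  have := pow5_ge m; lia.
split; first exact: ge.
split; first exact: (code_dim_eq gd g0 hn sg hdn).
split; last exact: sp_ok.
have [_ [d1 [d3 [d5 hlcm]]]] := hlc.
have rootsC : forall c, c \in C -> [/\ root (map_poly (toF F) (wpoly c)) alpha,
    root (map_poly (toF F) (wpoly c)) (alpha ^+ 3) &
    root (map_poly (toF F) (wpoly c)) (alpha ^+ 5)].
  move=> c; rewrite /C (mem_code gd g0 hn) => hc.
  have [_ [r1 _]] := h1; have [_ [r3 _]] := h3; have [_ [r5 _]] := h5.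
  split.
  - exact: (root_dvd hchar (dvdp_trans d1 hc) r1).
  - exact: (root_dvd hchar (dvdp_trans d3 hc) r3).
  - exact: (root_dvd hchar (dvdp_trans d5 hc) r5).
split.
  have [cw cw0 [r1 r3 hw]] := witness hchar hm hcard hb.
  have r5 : root (map_poly (toF F) (wpoly cw)) (alpha ^+ 5) by apply: (frob_root hchar).
  have inC : cw \in C.
    rewrite /C (mem_code gd g0 hn); apply: hlcm.
    - exact: (minpoly_dvd hchar h1 r1).
    - exact: (minpoly_dvd hchar h3 r3).
    - exact: (minpoly_dvd hchar h5 r5).
  exists cw => //; rewrite cw0 /= eqn_leq hw /=.

  exact: (@wt_ge4 F hchar m hm hcard alpha hb cw r1 r3 r5 cw0).
move=> c hc c0; have [r1 r3 r5] := rootsC c hc.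
exact: (@wt_ge4 F hchar m hm hcard alpha hb c r1 r3 r5 c0).
Qed.
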